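(* Let $\mathcal{T}$ be an $l$-eligible microdata table and run the algorithm described in the context (arbitrary tie-breaking). If the algorithm does not terminate by the end of Phase Two, then the set $\ddot{R}$ of removed tuples at the end of Phase Two has at least two pillars.
   Context: A microdata table $\mathcal{T}$ is a multiset of $n$ tuples with values on $d$ quasi-identifier (QI) attributes and one sensitive attribute (SA). For a multiset $Q$ and SA value $v$, $h(Q,v)$ is the number of tuples in $Q$ with SA value $v$, $h(Q)=\max_v h(Q,v)$, pillars of $Q$ are the $v$ with $h(Q,v)=h(Q)$; $Q$ is $l$-eligible if $|Q|\ge l\cdot h(Q)$. Let $Q_1,\dots,Q_s$ be the maximal classes of tuples of $\mathcal{T}$ with identical values on all QI attributes; the algorithm only moves tuples from these groups into a set $R$ (initially empty). Phase One: for each $i$, while $Q_i$ is not $l$-eligible, move a tuple of a pillar of $Q_i$ to $R$; if then $R$ is $l$-eligible, terminate. Phase Two terminology (w.r.t. current state): a group $Q$ is thin if $|Q|=l\cdot h(Q)$ and fat if $|Q|\ge l\cdot h(Q)+1$; $Q$ is conflicting if some pillar of $Q$ is a pillar of $R$; $Q$ is dead if thin and conflicting, alive otherwise; an SA value $v$ is alive if some alive group $Q$ has $h(Q,v)>0$. Phase Two iterates: if no SA value is alive, Phase Two ends. Otherwise pick an alive SA value $v$ minimizing $h(R,v)$ and an alive group $Q$ with $h(Q,v)>0$ (ties arbitrary); if $Q$ is fat move one tuple with SA value $v$ from $Q$ to $R$; if $Q$ is thin move one tuple of each pillar of $Q$ to $R$. If $R$ is now $l$-eligible, the algorithm terminates.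 *)

(* Defs.v *)
From mathcomp Require Import all_boot.
Set Implicit Arguments. Unset Strict Implicit. Unset Printing Implicit Defensive.

Section Anon.
Variable V : eqType.  (* sensitive-attribute values *)

(* Multisets of SA values are represented by sequences (order irrelevant). *)
Definition h (Q : seq V) (v : V) : nat := count_mem v Q.
Definition hmax (Q : seq V) : nat := \max_(v <- Q) count_mem v Q.
Definition pillar (Q : seq V) (v : V) : bool := h Q v == hmax Q.
Definition eligible (l : nat) (Q : seq V) : bool := l * hmax Q <= size Q.
Definition thin (l : nat) (Q : seq V) : bool := size Q == l * hmax Q.
Definition fat (l : nat) (Q : seq V) : bool := (l * hmax Q).+1 <= size Q.
Definition conflicting (Q R : seq V) : Prop := exists v : V, pillar Q v && pillar R v.
Definition dead (l : nat) (Q R : seq V) : Prop := thin l Q /\ conflicting Q R.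
Definition alive_group (l : nat) (Q R : seq V) : Prop := ~ dead l Q R.
Definition alive_value (l : nat) (gs : seq (seq V)) (R : seq V) (v : V) : Prop :=
  exists2 Q, Q \in gs & alive_group l Q R /\ 0 < h Q v.

Definition pillars (Q : seq V) : seq V := [seq u <- undup Q | pillar Q u].
Definition remove_each (ps Q : seq V) : seq V := foldr (fun u acc => rem u acc) Q ps.

(* Phase One, from group index i with current groups gs and removed set R,
   ending (without termination) with groups gs' and removed set R'.
   After each move the termination test is performed; non-terminating runs
   require that R be not l-eligible after each move. *)
Inductive phase1 (l : nat) : nat -> seq (seq V) -> seq V -> seq (seq V) -> seq V -> Prop :=
| p1_done i gs R : size gs <= i -> phase1 l i gs R gs R
| p1_next i gs R gs' R' :
    i < size gs -> eligible l (nth [::] gs i) ->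
    phase1 l i.+1 gs R gs' R' -> phase1 l i gs R gs' R'
| p1_move i gs R v gs' R' :
    i < size gs -> ~~ eligible l (nth [::] gs i) ->
    v \in nth [::] gs i -> pillar (nth [::] gs i) v ->
    ~~ eligible l (v :: R) ->
    phase1 l i (set_nth [::] gs i (rem v (nth [::] gs i))) (v :: R) gs' R' ->
    phase1 l i gs R gs' R'.

(* Phase Two, from groups gs and removed set R, ending (without termination,
   i.e. no SA value alive) with removed set Rf. *)
Inductive phase2 (l : nat) : seq (seq V) -> seq V -> seq V -> Prop :=
| p2_end gs R : (forall v, ~ alive_value l gs R v) -> phase2 l gs R R
| p2_fat gs R v j Rf :
    alive_value l gs R v ->
    (forall u, alive_value l gs R u -> h R v <= h R u) ->
    j < size gs -> alive_group l (nth [::] gs j) R -> 0 < h (nth [::] gs j) v ->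
    fat l (nth [::] gs j) ->
    ~~ eligible l (v :: R) ->
    phase2 l (set_nth [::] gs j (rem v (nth [::] gs j))) (v :: R) Rf ->
    phase2 l gs R Rf
| p2_thin gs R v j Rf :
    alive_value l gs R v ->
    (forall u, alive_value l gs R u -> h R v <= h R u) ->
    j < size gs -> alive_group l (nth [::] gs j) R -> 0 < h (nth [::] gs j) v ->
    thin l (nth [::] gs j) ->
    ~~ eligible l (pillars (nth [::] gs j) ++ R) ->
    phase2 l (set_nth [::] gs j (remove_each (pillars (nth [::] gs j)) (nth [::] gs j)))
             (pillars (nth [::] gs j) ++ R) Rf ->
    phase2 l gs R Rf.

End Anon.

(* The QI-group of table T with QI value q: multiset of SA values of its tuples. *)
Definition group (Q V : eqType) (T : seq (Q * V)) (q : Q) : seq V :=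
  [seq t.2 | t <- T & t.1 == q].

(* Main.v *)
Require Import Defs.
From mathcomp Require Import all_boot.
From Stdlib Require Import Classical.
From mathcomp Require Import zify.

Section Aux.
Variable V : eqType.

Lemma count_le_hmax (s : seq V) v : h s v <= hmax s.
Proof.
rewrite /h /hmax; have [vs|vns] := boolP (v \in s).
  exact: (leq_bigmax_seq (F := fun u => count_mem u s) v vs).
by rewrite (count_memPn vns).
Qed.

Lemma pillar_ex (s : seq V) : 0 < hmax s -> exists v, pillar s v.
Proof.
move=> hp; case: (boolP (has (fun v => count_mem v s == hmax s) s)).
  by case/hasP=> v _ /eqP e; exists v; rewrite /pillar /h e.
move/hasPn=> H; exfalso.
have : hmax s <= (hmax s).-1.
  rewrite {1}/hmax; apply/bigmax_leqP_seq => i iS _.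
  have := count_le_hmax s i; have := H i iS; rewrite /h.
  move/eqP; lia.
lia.
Qed.

Lemma flat_set (gs : seq (seq V)) j x : j < size gs ->
  perm_eq (nth [::] gs j ++ flatten (set_nth [::] gs j x)) (x ++ flatten gs).
Proof.
elim: gs j => [|a gs IH] [|j] //= Hj.
  by rewrite perm_catCA.
rewrite perm_catCA perm_sym perm_catCA perm_sym perm_cat2l; exact: IH.
Qed.

Lemma step (T' : seq V) gs R j ps x :
  j < size gs -> perm_eq (nth [::] gs j) (ps ++ x) ->
  perm_eq (R ++ flatten gs) T' ->
  perm_eq ((ps ++ R) ++ flatten (set_nth [::] gs j x)) T'.
Proof.
move=> Hj Hq Hp; apply: perm_trans Hp.
rewrite -catA perm_catCA perm_cat2l.
have H1 := @flat_set gs j x Hj.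
rewrite -(perm_cat2l x); apply: perm_trans H1.
rewrite perm_catCA catA perm_cat2r perm_sym; exact: Hq.
Qed.

Lemma remove_each_perm (ps Q : seq V) : uniq ps -> {subset ps <= Q} ->
  perm_eq Q (ps ++ remove_each ps Q).
Proof.
elim: ps => [|u ps IH] /=; first by rewrite /remove_each.
case/andP=> nu up sub.
have IH' := IH up (fun y yi => sub y (mem_behead (s:=u::ps) yi)).
have uR : u \in remove_each ps Q.
  have : u \in ps ++ remove_each ps Q by rewrite -(perm_mem IH') sub // inE eqxx.
  by rewrite mem_cat (negbTE nu).
rewrite /remove_each /= -/(remove_each ps Q).
apply: (perm_trans IH').
rewrite perm_sym -cat1s perm_catCA perm_cat2l perm_sym cat1s; exact: perm_to_rem.
Qed.

Lemma pillars_perm (Q : seq V) : perm_eq Q (pillars Q ++ remove_each (pillars Q) Q).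
Proof.
apply: remove_each_perm; first by rewrite filter_uniq ?undup_uniq.
by move=> y; rewrite mem_filter mem_undup => /andP[].
Qed.

End Aux.

Lemma sumnD (A : Type) (f g : A -> nat) s :
  sumn [seq f q + g q | q <- s] = sumn (map f s) + sumn (map g s).
Proof. by elim: s => //= a s ->; lia. Qed.

Lemma sumn_ind (A : eqType) (x : A) (b : bool) s :
  sumn [seq nat_of_bool ((x == q) && b) | q <- s] = b * count_mem x s.
Proof.
elim: s => [|a s IH] /=; first by rewrite muln0.
rewrite IH [a == x]eq_sym; case: (x == a); move: IH; case: b => /= _; lia.
Qed.

Lemma init_perm (Q V : eqType) (T : seq (Q * V)) qs :
  uniq qs -> (forall t, t \in T -> t.1 \in qs) ->
  perm_eq (flatten [seq group T q | q <- qs]) [seq t.2 | t <- T].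
Proof.
move=> uq HT; apply/permP => a; rewrite count_flatten -map_comp.
have E : forall q, count a (group T q) = count (fun t => (t.1 == q) && a t.2) T.
  move=> q; rewrite /group count_map count_filter; apply: eq_count => t /=; exact: andbC.
rewrite (eq_map (g := fun q => count (fun t => (t.1 == q) && a t.2) T)); last first.
  by move=> q /=; rewrite E.
rewrite count_map; clear E.
elim: T HT => [|t T IH] HT /=; first by elim: qs {uq HT} => //.
rewrite sumnD IH; last by move=> u uT; apply: HT; rewrite inE uT orbT.
rewrite sumn_ind count_uniq_mem // HT ?inE ?eqxx //= muln1.
by rewrite addnC.
Qed.

Section Main.
Variable V : eqType.

Lemma in_of_h (Q : seq V) v : 0 < h Q v -> v \in Q.
Proof. by rewrite /h -has_count has_pred1. Qed.

Lemma flatten_sum l p (gs : seq (seq V)) :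
  (forall Q, Q \in gs -> size Q = l * count_mem p Q) ->
  size (flatten gs) = l * count_mem p (flatten gs).
Proof.
elim: gs => [|Q gs IH] H /=; first by rewrite muln0.
rewrite size_cat count_cat mulnDr H ?inE ?eqxx // IH // => Q' Q'i.
by apply: H; rewrite inE Q'i orbT.
Qed.

Lemma final l gs R (T' : seq V) :
  2 <= l -> 0 < size T' -> eligible l T' ->
  (forall v, ~ alive_value l gs R v) -> perm_eq (R ++ flatten gs) T' ->
  (R = [::] \/ ~~ eligible l R) ->
  exists v1 v2 : V, [/\ v1 != v2, pillar R v1 & pillar R v2].
Proof.
move=> l2 sT eT Hnot Hp HR.
case: (boolP (eligible l R)) => [eR | neR].
  have R0 : R = [::] by case: HR => //; rewrite eR.
  subst R.
  case: T' sT eT Hp => // x T'' _ eT Hp.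
  case: (boolP (all (pred1 x) (x :: T''))) => [Hall|].
    exfalso; move: Hall; rewrite all_count => /eqP Hc.
    have := @count_le_hmax V (x :: T'') x; rewrite /h Hc.
    move: eT; rewrite /eligible /= => eT.
    move=> Hle; nia.
  case/allPn => y yT ney.
  exists x, y; split; first by rewrite eq_sym.
    by rewrite /pillar /h /hmax big_nil.
  by rewrite /pillar /h /hmax big_nil.
have hp : 0 < hmax R by move: neR; rewrite /eligible; lia.
have [p pR] := @pillar_ex V R hp.
apply: NNPP => Hn.
have uniq_p : forall v, pillar R v -> v = p.
  move=> v pv; apply/eqP; apply/negPn/negP => nvp; by apply: Hn; exists v, p; split.
have HQ : forall Q, Q \in gs -> size Q = l * count_mem p Q.
  move=> [|u Q'] QS; first by rewrite /= muln0.
  have Hd : dead l (u :: Q') R.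
    apply: NNPP => nd; apply: (Hnot u); exists (u :: Q') => //; split => //.
    by rewrite /h /= eqxx.
  case: Hd => /eqP th [w /andP[pQ pRv]].
  have vp := uniq_p w pRv; subst w.
  by rewrite th; move: pQ; rewrite /pillar /h => /eqP ->.
have Hs := @flatten_sum l p gs HQ.
have Hsz := perm_size Hp; rewrite size_cat in Hsz.
have Hc := (permP Hp) (pred1 p); rewrite count_cat /= in Hc.
have Hle := @count_le_hmax V T' p.
move: pR neR eT Hle; rewrite /pillar /h /eligible => /eqP pR neR eT Hle.
rewrite -Hc in Hle; rewrite -Hsz in eT.
move: neR; rewrite -pR => neR.
have : l * (count_mem p R + count_mem p (flatten gs)) <= size R + size (flatten gs).
  by apply: leq_trans eT; rewrite leq_mul2l Hle orbT.
rewrite Hs mulnDr; lia.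
Qed.

Lemma phase1_inv l i gs R gs' R' (T' : seq V) :
  phase1 l i gs R gs' R' -> perm_eq (R ++ flatten gs) T' ->
  (R = [::] \/ ~~ eligible l R) ->
  perm_eq (R' ++ flatten gs') T' /\ (R' = [::] \/ ~~ eligible l R').
Proof.
elim => //.
move=> {}i {}gs {}R v {}gs' {}R' Hi _ vin _ ne _ IH Hp _.
apply: IH; last by right.
apply: (@step _ T' gs R i [:: v]) => //; exact: perm_to_rem.
Qed.

Lemma phase2_inv l gs R Rf (T' : seq V) :
  phase2 l gs R Rf -> 2 <= l -> 0 < size T' -> eligible l T' ->
  perm_eq (R ++ flatten gs) T' -> (R = [::] \/ ~~ eligible l R) ->
  exists v1 v2 : V, [/\ v1 != v2, pillar Rf v1 & pillar Rf v2].
Proof.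
move=> H l2 sT eT; elim: H.
- move=> {}gs {}R Hn Hp HR; exact: final l2 sT eT Hn Hp HR.
- move=> {}gs {}R v j {}Rf _ _ Hj _ hv _ ne _ IH Hp _.
  apply: IH; last by right.
  apply: (@step _ T' gs R j [:: v]) => //; apply: perm_to_rem; exact: in_of_h.
- move=> {}gs {}R v j {}Rf _ _ Hj _ hv _ ne _ IH Hp _.
  apply: IH; last by right.
  apply: step => //; exact: pillars_perm.
Qed.

End Main.

Theorem corollary4 (Q V : eqType) (l : nat) (T : seq (Q * V)) (qs : seq Q)
    (gs1 : seq (seq V)) (R1 Rf : seq V) :
  2 <= l -> 0 < size T ->
  eligible l [seq t.2 | t <- T] ->
  uniq qs -> (forall q, (q \in qs) = (q \in [seq t.1 | t <- T])) ->
  phase1 l 0 [seq group T q | q <- qs] [::] gs1 R1 ->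
  phase2 l gs1 R1 Rf ->
  exists v1 v2 : V, [/\ v1 != v2, pillar Rf v1 & pillar Rf v2].
Proof.
move=> l2 sT eT uq Hq H1 H2.
have Hi := @init_perm Q V T qs uq (fun t tT => etrans (Hq t.1) (map_f _ tT)).
have [Hp HR] := @phase1_inv V _ _ _ _ _ _ _ H1 Hi (or_introl erefl : [::] = [::] \/ _).
apply: (@phase2_inv V _ _ _ _ _ H2 l2 _ eT Hp HR); by rewrite size_map.
Qed.
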